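(* Let $X,Y$ be finite sets, $u:X\times Y\to\mathbb{R}$, $\rho\in\Delta(X)$ and $\phi\in\Delta(Y)$. A joint distribution $\gamma\in\Delta(X\times Y)$ with $X$-marginal $\rho$ and $Y$-marginal $\phi$ is the unique solution to the optimal transport problem \[\max_{\gamma'\in\Delta(X\times Y)}\sum_{x,y}u(x,y)\gamma'(x,y)\quad\text{s.t. }\gamma'\text{ has }X\text{-marginal }\rho\text{ and }Y\text{-marginal }\phi\] if and only if its support $\mathrm{supp}(\gamma)\subset X\times Y$ is strictly $u$-cyclically monotone.
   Context: A set $S\subset X\times Y$ is strictly $u$-cyclically monotone if for every finite collection of pairs $\{(x_i,y_i)\}_{i=1}^N\subset S$ such that the set $\{(x_i,y_i)\}_{i=1}^N$ differs from the set $\{(x_i,y_{i+1})\}_{i=1}^N$ (with the convention $y_{N+1}=y_1$), one has $\sum_{i=1}^Nu(x_i,y_i)>\sum_{i=1}^Nu(x_i,y_{i+1})$. *)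

(* Defs.v *)
From mathcomp Require Import all_boot all_order all_algebra.
From mathcomp Require Import reals.
Set Implicit Arguments. Unset Strict Implicit. Unset Printing Implicit Defensive.
Import Order.TTheory GRing.Theory Num.Theory.
Local Open Scope ring_scope.

Section OT.
Variable R : realType.

Definition is_dist (T : finType) (p : {ffun T -> R}) : Prop :=
  (forall t, 0 <= p t) /\ \sum_(t : T) p t = 1.

Variables X Y : finType.

Definition has_marginals (g : {ffun X * Y -> R}) (rho : {ffun X -> R})
  (phi : {ffun Y -> R}) : Prop :=
  (forall x, \sum_(y : Y) g (x, y) = rho x) /\
  (forall y, \sum_(x : X) g (x, y) = phi y).

Definition ot_feasible (rho : {ffun X -> R}) (phi : {ffun Y -> R})
  (g : {ffun X * Y -> R}) : Prop := is_dist g /\ has_marginals g rho phi.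

Definition ot_value (u : X -> Y -> R) (g : {ffun X * Y -> R}) : R :=
  \sum_(p : X * Y) u p.1 p.2 * g p.

Definition ot_optimal (u : X -> Y -> R) rho phi (g : {ffun X * Y -> R}) : Prop :=
  ot_feasible rho phi g /\
  forall g', ot_feasible rho phi g' -> ot_value u g' <= ot_value u g.

Definition ot_unique_solution (u : X -> Y -> R) rho phi
  (g : {ffun X * Y -> R}) : Prop :=
  ot_optimal u rho phi g /\ forall g', ot_optimal u rho phi g' -> g' = g.

Definition supp (g : {ffun X * Y -> R}) : pred (X * Y) :=
  [pred p | g p != 0].

(* the shifted collection (x_i, y_{i+1}), with y_{N+1} = y_1 *)
Definition cyc_shift (s : seq (X * Y)) : seq (X * Y) :=
  zip (map fst s) (rot 1 (map snd s)).

Definition strictly_cyc_monotone (u : X -> Y -> R) (S : pred (X * Y)) : Prop :=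
  forall s : seq (X * Y),
    all (fun p => S p) s ->
    ~ (s =i cyc_shift s) ->
    \sum_(p <- cyc_shift s) u p.1 p.2 < \sum_(p <- s) u p.1 p.2.

End OT.

(* Main.v *)
Require Import Defs.
From mathcomp Require Import all_boot all_order all_algebra.
From mathcomp Require Import reals zify ring.
Import Order.TTheory GRing.Theory Num.Theory.
Local Open Scope ring_scope.


Lemma map_traject_f (T : Type) (f : T -> T) y n :
  map f (traject f y n) = traject f (f y) n.
Proof. by elim: n y => //= n IH y; rewrite IH. Qed.

Lemma zip_rot1 (A B : Type) (a : seq A) (b : seq B) :
  size a = size b -> zip (rot 1 a) (rot 1 b) = rot 1 (zip a b).
Proof.
case: a => [|x a]; case: b => [|y b] //= [E].
by rewrite !rot1_cons zip_rcons.
Qed.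

Local Close Scope ring_scope.
Lemma periodic (T : finType) (f : T -> T) (x1 : T) :
  exists i k, [/\ (0 < k)%N, iter k f (iter i f x1) = iter i f x1 &
                 uniq (traject f (iter i f x1) k)].
Proof.
have : ~~ uniq (traject f x1 #|T|.+1).
  apply/negP => /card_uniqP; rewrite size_traject => H.
  by have := max_card (mem (traject f x1 #|T|.+1)); rewrite H ltnn.
case/(uniqPn x1) => i [j [ltij]]; rewrite size_traject => ltj.
rewrite !nth_traject ?(ltn_trans ltij) // => Eij.
set x := iter #|T| f x1.
have Hp : exists k, (0 < k) && (iter k f x == x).
  exists (j - i); rewrite subn_gt0 ltij /x -iterD.
  have -> : (j - i + #|T| = (#|T| - i) + j)%N.
    lia.
  by rewrite iterD -Eij -iterD subnK ?eqxx //; lia.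
case: (ex_minnP Hp) => k /andP[k0 /eqP Hk] Hmin.
exists #|T|, k; split => //.
apply/(uniqP x) => a b; rewrite !inE size_traject => Ha Hb.
rewrite !nth_traject //.
wlog lab : a b Ha Hb / (a <= b)%N.
  move=> W; case: (leqP a b) => [|/ltnW] lab E; first exact: W.
  by apply/esym/W.
move=> E; apply/eqP; rewrite eqn_leq lab /=; rewrite leqNgt; apply/negP => ltab.
have := Hmin (k - b + a)%N.
rewrite addn_gt0 subn_gt0 Hb /= iterD E -iterD subnK ?(ltnW Hb) // Hk eqxx.
move=> /(_ isT).
lia.
Qed.

Local Open Scope ring_scope.
Section Aux.
Variable R : realType.
Variables X Y : finType.

Definition cnt (l : seq (X * Y)) (p : X * Y) : R := (count_mem p l)%:R.

Lemma cnt_sum (l : seq (X * Y)) (f : X * Y -> R) :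
  \sum_p cnt l p * f p = \sum_(p <- l) f p.
Proof.
elim: l => [|a l IH]; first by rewrite big_nil big1 // => p; rewrite /cnt /= mul0r.
rewrite big_cons -IH /cnt /=.
rewrite (eq_bigr (fun p => (a == p)%:R * f p + (count_mem p l)%:R * f p)); last first.
  by move=> p _; rewrite natrD mulrDl.
rewrite big_split /=; congr (_ + _).
rewrite (bigD1 a) //= eqxx mul1r big1 ?addr0 // => p /negbTE.
by rewrite eq_sym => ->; rewrite mul0r.
Qed.

Lemma cnt_row (l : seq (X * Y)) x :
  \sum_y cnt l (x, y) = (count_mem x (map fst l))%:R.
Proof.
elim: l => [|[a b] l IH]; first by rewrite big1.
rewrite /cnt /= natrD -IH /cnt.
rewrite (eq_bigr (fun y => ((a, b) == (x, y))%:R + (count_mem (x, y) l)%:R)); last first.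
  by move=> y _; rewrite natrD.
rewrite big_split /=; congr (_ + _).
case: (eqVneq a x) => [->|ne].
  rewrite (bigD1 b) //= eqxx big1 ?addr0 // => y /negbTE.
  by rewrite xpair_eqE eqxx eq_sym => ->.
by rewrite big1 // => y _; rewrite xpair_eqE (negbTE ne).
Qed.

Lemma cnt_col (l : seq (X * Y)) y :
  \sum_x cnt l (x, y) = (count_mem y (map snd l))%:R.
Proof.
elim: l => [|[a b] l IH]; first by rewrite big1.
rewrite /cnt /= natrD -IH /cnt.
rewrite (eq_bigr (fun x => ((a, b) == (x, y))%:R + (count_mem (x, y) l)%:R)); last first.
  by move=> x _; rewrite natrD.
rewrite big_split /=; congr (_ + _).
case: (eqVneq b y) => [->|ne].
  rewrite (bigD1 a) //= eqxx big1 ?addr0 // => x /negbTE.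
  by rewrite xpair_eqE eqxx andbT eq_sym => ->.
by rewrite big1 // => x _; rewrite xpair_eqE (negbTE ne) andbF.
Qed.

Lemma marg0 (s t : seq (X * Y)) :
  perm_eq (map fst s) (map fst t) -> perm_eq (map snd s) (map snd t) ->
  (forall x, \sum_y (cnt t (x, y) - cnt s (x, y)) = 0) /\
  (forall y, \sum_x (cnt t (x, y) - cnt s (x, y)) = 0).
Proof.
move=> /permP H1 /permP H2; split=> z; rewrite sumrB.
  by rewrite !cnt_row H1 subrr.
by rewrite !cnt_col H2 subrr.
Qed.

Lemma sum_pair0 (c : X * Y -> R) :
  (forall x, \sum_y c (x, y) = 0) -> \sum_p c p = 0.
Proof.
move=> H; transitivity (\sum_x \sum_y c (x, y)); last by rewrite big1.
by rewrite pair_big /=; apply: eq_bigr => -[x y].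
Qed.

Lemma mem_cnt (l : seq (X * Y)) p : (p \in l) = (0 < count_mem p l)%N.
Proof. by rewrite -has_pred1 has_count. Qed.


Lemma find_cycle (D : X * Y -> R) :
  (forall x, \sum_y D (x, y) = 0) -> (forall y, \sum_x D (x, y) = 0) ->
  (exists p, D p != 0) ->
  exists s t : seq (X * Y), [/\ [/\ s != [::], uniq s & uniq t],
     {in s, forall p, D p < 0}, {in t, forall p, 0 < D p}
     & [/\ perm_eq (map fst s) (map fst t), map snd s = map snd t
         & perm_eq (cyc_shift s) t]].
Proof.
move=> Hr Hc [[a0 b0] Hp0].
pose posY x := odflt b0 [pick y | 0 < D (x, y)].
pose negX y := odflt a0 [pick x | D (x, y) < 0].
have rowpos : forall x y, D (x, y) < 0 -> 0 < D (x, posY x).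
  move=> x y Hn; rewrite /posY; case: pickP => [z //|H0].
  have E : - D (x, y) = 0.
    apply: (@psumr_eq0P _ _ xpredT (fun z => - D (x, z))) => //.
      by move=> z _; rewrite oppr_ge0 leNgt H0.
    by rewrite sumrN Hr oppr0.
  by move/eqP: E; rewrite oppr_eq0 => /eqP E; rewrite E ltxx in Hn.
have colneg : forall x y, 0 < D (x, y) -> D (negX y, y) < 0.
  move=> x y Hn; rewrite /negX; case: pickP => [z //|H0].
  have E : D (x, y) = 0.
    apply: (@psumr_eq0P _ _ xpredT (fun z => D (z, y))) => //.
    by move=> z _; rewrite leNgt H0.
  by rewrite E ltxx in Hn.
pose H x := negX (posY x).
pose N x := [exists y, D (x, y) < 0].
have NH : forall x, N x -> N (H x).
  move=> x /existsP[y Hy]; apply/existsP; exists (posY x).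
  exact: colneg (rowpos _ _ Hy).
have [x1 Nx1] : exists x1, N x1.
  case: (ltrgtP (D (a0, b0)) 0) => [Hn|Hpos|E].
  - by exists a0; apply/existsP; exists b0.
  - by exists (negX b0); apply/existsP; exists b0; exact: colneg Hpos.
  - by rewrite E eqxx in Hp0.
have Niter : forall n, N (iter n H x1) by elim => // n IH; rewrite iterS; apply: NH.
have [i [k [k0 Hk Hu]]] := @periodic _ H x1.
set x := iter i H x1 in Hk Hu.
pose ws := traject H x k.
have Nws : {in ws, forall w, N w}.
  by move=> w /trajectP [n _ ->]; rewrite /x -iterD.
pose t := [seq (w, posY w) | w <- ws].
pose s := [seq (H w, posY w) | w <- ws].
have ft : map fst t = ws by rewrite /t -map_comp; exact: map_id.
have Hrot : map H ws = rot 1 ws.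
  have gen : forall n, (0 < n)%N -> iter n H x = x ->
      map H (traject H x n) = rot 1 (traject H x n).
    case=> // n _ Hn.
    by rewrite trajectS rot1_cons /= map_traject_f -trajectS trajectSr -iterSr Hn.
  exact: gen.
have fs : map fst s = rot 1 ws by rewrite -Hrot /s -map_comp.
have ss : map snd s = map snd t by rewrite /s /t -!map_comp.
have cs : cyc_shift s = rot 1 t.
  rewrite /cyc_shift fs ss zip_rot1; last by rewrite !size_map.
  by rewrite -{1}ft zip_unzip.
exists s, t; split; first split.
- by rewrite -size_eq0 size_map size_traject -lt0n.
- by apply: (@map_uniq _ _ fst); rewrite fs rot_uniq.
- by apply: (@map_uniq _ _ fst); rewrite ft.
- move=> p /mapP[w Hw ->]; move: (Nws w Hw) => /existsP[y Hy].
  exact: colneg (rowpos _ _ Hy).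
- move=> p /mapP[w Hw ->]; move: (Nws w Hw) => /existsP[y Hy].
  exact: rowpos Hy.
- split => //; first by rewrite fs ft perm_rot.
  by rewrite cs perm_rot.
Qed.

Lemma min_seq (l : seq (X * Y)) (f : X * Y -> R) : l != [::] ->
  exists2 p, p \in l & forall q, q \in l -> f p <= f q.
Proof.
elim: l => // a l IH _.
case: (eqVneq l [::]) => [->|lne].
  by exists a => [|q]; rewrite ?mem_seq1 ?eqxx // => /eqP ->.
have [p Hp Hm] := IH lne.
case: (leP (f a) (f p)) => [Hap|Hpa].
  exists a; first by rewrite mem_head.
  by move=> q; rewrite inE => /orP[/eqP ->//|/Hm]; apply: le_trans.
exists p; first by rewrite inE Hp orbT.
by move=> q; rewrite inE => /orP[/eqP ->|/Hm//]; apply: ltW.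
Qed.

Lemma neg_sum (u : X -> Y -> R) (S : pred (X * Y)) :
  strictly_cyc_monotone u S -> forall (n : nat) (D : X * Y -> R),
  (#|[pred p | D p != 0%R]| <= n)%N ->
  (forall x, \sum_y D (x, y) = 0) -> (forall y, \sum_x D (x, y) = 0) ->
  (forall p, D p < 0 -> S p) -> (exists p, D p != 0) ->
  \sum_p u p.1 p.2 * D p < 0.
Proof.
move=> Hscm; elim=> [|n IH] D Hcard Hr Hc HS Hnz.
  case: Hnz => p Hp; move: Hcard; rewrite leqn0 => /eqP/card0_eq/(_ p).
  by rewrite !inE Hp.
have [s [t [[sne us ut] negs post [pf ps pc]]]] := find_cycle D Hr Hc Hnz.
have ne : s ++ t != [::] by rewrite -size_eq0 size_cat addn_eq0 size_eq0 (negbTE sne).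
have [p0 Hp0 Hmin] := @min_seq (s ++ t) (fun p => `|D p|) ne.
set d := `|D p0|.
have stdisj : forall p, p \in s -> p \notin t.
  move=> p /negs Hn; apply/negP => /post Hp.
  by have := lt_trans Hn Hp; rewrite ltxx.
have Dp0 : D p0 != 0.
  move: Hp0; rewrite mem_cat => /orP[/negs H|/post H].
    by rewrite lt_eqF.
  by rewrite gt_eqF.
have d0 : 0 < d by rewrite normr_gt0.
have cS : forall p, cnt s p = (p \in s)%:R by move=> p; rewrite /cnt count_uniq_mem.
have cT : forall p, cnt t p = (p \in t)%:R by move=> p; rewrite /cnt count_uniq_mem.
pose D' p := D p + d * (cnt s p - cnt t p).
have pf' : perm_eq (map fst t) (map fst s) by rewrite perm_sym.
have ps' : perm_eq (map snd t) (map snd s) by rewrite ps.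
have [mr mc] := @marg0 t s pf' ps'.
have Hr' : forall x, \sum_y D' (x, y) = 0.
  by move=> x; rewrite /D' big_split /= -mulr_sumr mr Hr mulr0 addr0.
have Hc' : forall y, \sum_x D' (x, y) = 0.
  by move=> y; rewrite /D' big_split /= -mulr_sumr mc Hc mulr0 addr0.
have HS' : forall p, D' p < 0 -> S p.
  move=> p; case: (boolP (p \in s)) => [/negs Hn _|ns]; first exact: HS.
  rewrite /D' cS cT (negbTE ns) sub0r; case: (boolP (p \in t)) => [Ht|nt].
    rewrite mulrN1 subr_lt0 => H; exfalso; move: H; apply/negP; rewrite -leNgt.
    by rewrite /d -[D p]gtr0_norm ?post //; apply: Hmin; rewrite mem_cat Ht orbT.
  by rewrite oppr0 mulr0 addr0; apply: HS.
have Hsub : forall p, D' p != 0 -> D p != 0.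
  move=> p; rewrite /D' cS cT.
  case: (boolP (p \in s)) => [/negs Hn _|ns]; first by rewrite lt_eqF.
  case: (boolP (p \in t)) => [/post Hp _|nt]; first by rewrite gt_eqF.
  by rewrite subrr mulr0 addr0.
have D'p0 : D' p0 = 0.
  rewrite /D' cS cT; move: Hp0; rewrite mem_cat => /orP[Hs|Ht].
    rewrite Hs (negbTE (stdisj _ Hs)) subr0 mulr1 /d ltr0_norm ?negs //.
    by rewrite addrN.
  have ns : p0 \notin s by apply/negP => /stdisj; rewrite Ht.
  rewrite Ht (negbTE ns) sub0r mulrN1 /d gtr0_norm ?post //.
  by rewrite addrN.
have Hcard' : (#|[pred p | D' p != 0%R]| <= n)%N.
  rewrite -ltnS; apply: leq_trans Hcard; apply: proper_card; apply/properP; split.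
    by apply/subsetP => p; rewrite !inE; apply: Hsub.
  by exists p0; rewrite !inE ?D'p0 ?eqxx.
have Hval : \sum_p u p.1 p.2 * D p =
    \sum_p u p.1 p.2 * D' p - d * (\sum_(p <- s) u p.1 p.2 - \sum_(p <- t) u p.1 p.2).
  rewrite -(cnt_sum s (fun p => u p.1 p.2)) -(cnt_sum t (fun p => u p.1 p.2)).
  rewrite -sumrB mulr_sumr -sumrB; apply: eq_bigr => p _.
  rewrite /D'; ring.
have Hlt : \sum_(p <- t) u p.1 p.2 < \sum_(p <- s) u p.1 p.2.
  rewrite -(perm_big _ pc); apply: Hscm.
    by apply/allP => p /negs /HS.
  move: sne; case Es: s => [//|a s'] _ Heq.
  have : a \in cyc_shift (a :: s') by rewrite -Heq mem_head.
  rewrite -Es (perm_mem pc) => /post; rewrite ltNge le_eqVlt.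
  by rewrite (negs a) ?orbT // Es mem_head.
have Hpos : 0 < d * (\sum_(p <- s) u p.1 p.2 - \sum_(p <- t) u p.1 p.2).
  by rewrite mulr_gt0 // subr_gt0.
rewrite Hval; case: (boolP [exists p, D' p != 0]) => [/existsP[p Hp]|/existsPn H0].
  rewrite ltrBlDr; apply: lt_trans (IH D' Hcard' Hr' Hc' HS' (ex_intro _ p Hp)) _.
  by rewrite add0r.
rewrite big1 ?sub0r ?oppr_lt0 // => p _.
by move: (H0 p); rewrite negbK => /eqP ->; rewrite mulr0.
Qed.

Lemma dir1 (u : X -> Y -> R) rho phi (g : {ffun X * Y -> R}) :
  ot_unique_solution u rho phi g -> strictly_cyc_monotone u (supp g).
Proof.
move=> [[[[g0 g1] [gr gc]] Hopt] Huniq] s Hall Hne.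
rewrite ltNge; apply/negP => Hle.
have sne : s != [::].
  by case: s Hall Hne Hle => // _ H _; exfalso; apply: H.
set t := cyc_shift s in Hle Hne *.
have [p0 Hp0 Hmin] := @min_seq s g sne.
have gp0 : 0 < g p0.
  have := allP Hall p0 Hp0; rewrite /supp /= => nz.
  by rewrite lt_def nz g0.
pose eps := g p0 / (size s)%:R.
have sz0 : 0 < (size s)%:R :> R by rewrite ltr0n lt0n size_eq0.
have eps0 : 0 < eps by rewrite divr_gt0.
have pf : perm_eq (map fst s) (map fst t).
  have := @unzip1_zip _ _ (map fst s) (rot 1 (map snd s)).
  by rewrite /unzip1 size_rot !size_map leqnn /t /cyc_shift => /(_ isT) ->.
have ps : perm_eq (map snd s) (map snd t).
  have := @unzip2_zip _ _ (map fst s) (rot 1 (map snd s)).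
  rewrite /unzip2 size_rot !size_map leqnn /t /cyc_shift => /(_ isT) ->.
  by rewrite perm_sym perm_rot.
have [mr mc] := @marg0 s t pf ps.
pose g' := [ffun p => g p + eps * (cnt t p - cnt s p)].
have feas' : ot_feasible rho phi g'.
  split; [split|split].
  - move=> p; rewrite ffunE; case: (boolP (p \in s)) => Hp.
      rewrite mulrBr addrA subr_ge0.
      have H1 : eps * cnt s p <= g p0.
        have E : eps * (size s)%:R = g p0 by rewrite /eps divfK // gt_eqF.
        rewrite -E; apply: ler_wpM2l; first exact: ltW.
        by rewrite /cnt ler_nat count_size.
      apply: le_trans H1 _; apply: le_trans (Hmin _ Hp) _.
      by rewrite lerDl; apply: mulr_ge0; [exact: ltW | exact: ler0n].
    rewrite /cnt (count_memPn Hp) subr0 addr_ge0 ?g0 //.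
    by apply: mulr_ge0; [exact: ltW | exact: ler0n].
  - rewrite (eq_bigr (fun p => g p + eps * (cnt t p - cnt s p))); last by move=> p _; rewrite ffunE.
    rewrite big_split /= g1 -mulr_sumr (sum_pair0 (fun p => cnt t p - cnt s p) mr).
    by rewrite mulr0 addr0.
  - move=> x; rewrite (eq_bigr (fun y => g (x, y) + eps * (cnt t (x, y) - cnt s (x, y)))); last by move=> y _; rewrite ffunE.
    by rewrite big_split /= gr -mulr_sumr mr mulr0 addr0.
  - move=> y; rewrite (eq_bigr (fun x => g (x, y) + eps * (cnt t (x, y) - cnt s (x, y)))); last by move=> x _; rewrite ffunE.
    by rewrite big_split /= gc -mulr_sumr mc mulr0 addr0.
have Hval : ot_value u g' = ot_value u g +
    eps * (\sum_(p <- t) u p.1 p.2 - \sum_(p <- s) u p.1 p.2).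
  rewrite /ot_value -(cnt_sum t (fun p => u p.1 p.2)) -(cnt_sum s (fun p => u p.1 p.2)).
  rewrite -sumrB mulr_sumr -big_split /=; apply: eq_bigr => p _.
  rewrite ffunE; ring.
have opt' : ot_optimal u rho phi g'.
  split => // g'' Hf; apply: le_trans (Hopt g'' Hf) _.
  rewrite Hval lerDl; apply: mulr_ge0; [exact: ltW | by rewrite subr_ge0].
have E := Huniq g' opt'.
apply: Hne => p; rewrite !mem_cnt.
have := congr1 (fun f : {ffun X * Y -> R} => f p) E; rewrite /= ffunE => /eqP.
rewrite addrC -subr_eq0 addrK mulf_eq0 (gt_eqF eps0) /= subr_eq0 /cnt eqr_nat.
by move=> /eqP ->.
Qed.

Lemma dir2 (u : X -> Y -> R) rho phi (g : {ffun X * Y -> R}) :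
  ot_feasible rho phi g -> strictly_cyc_monotone u (supp g) ->
  ot_unique_solution u rho phi g.
Proof.
move=> Hfeas Hscm.
have key : forall g', ot_feasible rho phi g' -> g' != g ->
    ot_value u g' < ot_value u g.
  move=> g' [[g0' g1'] [gr' gc']] ne.
  case: Hfeas => [[g0 g1] [gr gc]].
  pose D p := g' p - g p.
  rewrite -subr_lt0.
  have -> : ot_value u g' - ot_value u g = \sum_p u p.1 p.2 * D p.
    by rewrite /ot_value -sumrB; apply: eq_bigr => p _; rewrite mulrBr.
  apply: (@neg_sum u (supp g) Hscm _ D (leqnn _)).
  - by move=> x; rewrite sumrB gr gr' subrr.
  - by move=> y; rewrite sumrB gc gc' subrr.
  - move=> p; rewrite /D subr_lt0 => H; rewrite /supp /=.
    by rewrite gt_eqF // (le_lt_trans (g0' p) H).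
  - have : [exists p, D p != 0].
      case: (boolP [exists p, D p != 0]) => [//|/existsPn H]; exfalso; move/eqP: ne; apply; apply/ffunP => p.
      by move/negPn: (H p); rewrite subr_eq0 => /eqP.
    by case/existsP => p Hp; exists p.
split; first split => // g' Hf.
  by case: (eqVneq g' g) => [->//|ne]; exact: ltW (key _ Hf ne).
move=> g' [Hf Hopt']; apply/eqP/negPn/negP => ne.
by have := Hopt' g Hfeas; rewrite leNgt key.
Qed.

End Aux.

Theorem proposition4 (R : realType) (X Y : finType) (u : X -> Y -> R)
  (rho : {ffun X -> R}) (phi : {ffun Y -> R}) (gamma : {ffun X * Y -> R}) :
  is_dist rho -> is_dist phi -> is_dist gamma -> has_marginals gamma rho phi ->
  (ot_unique_solution u rho phi gamma <->
   strictly_cyc_monotone u (supp gamma)).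
Proof.
move=> _ _ Hg Hm; split; first exact: dir1.
by apply: dir2; split.
Qed.
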